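(* Let $N$ be a positive integer. If there is at least one pair of palindromic numbers $A,B$ with $N=A/B$, then there are infinitely many such pairs.
   Context: A positive integer $n$ is palindromic if its binary representation (most significant digit first, no leading zeros) reads the same forwards and backwards. *)

(* Defs.v *)
From mathcomp Require Import all_boot.
Set Implicit Arguments.
Unset Strict Implicit.
Unset Printing Implicit Defensive.

(* Binary digits of n, least significant first, no leading zeros
   (bits 0 = [::]). Defined by well-founded-free recursion with fuel n. *)
Fixpoint bits_aux (fuel n : nat) : seq bool :=
  match fuel with
  | 0 => [::]
  | fuel'.+1 => if n == 0 then [::] else odd n :: bits_aux fuel' n./2
  end.

Definition bits (n : nat) : seq bool := bits_aux n n.

Definition palindromic (n : nat) : Prop := 0 < n /\ rev (bits n) = bits n.

Example bits_test : [:: bits 6; bits 5; bits 1; bits 0] =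
  [:: [:: false; true; true]; [:: true; false; true]; [:: true]; [::]].
Proof. by []. Qed.

(* Main.v *)
Require Import Defs.
From mathcomp Require Import all_boot.
From mathcomp Require Import zify.

Lemma bits_aux_S f n : n <= f -> bits_aux f n = bits_aux f.+1 n.
Proof.
elim: f n => [|f IH] n Hn /=.
  by move: Hn; rewrite leqn0 => /eqP ->.
case: eqP => // Hn0; congr (_ :: _); apply: IH.
have := ltn_half_double n. lia.
Qed.

Lemma bits_aux_ge f n : n <= f -> bits_aux f n = bits n.
Proof.
rewrite /bits; elim: f => [|f IH] Hn.
  by move: Hn; rewrite leqn0 => /eqP ->.
case: (ltnP n f.+1) => H.
  by rewrite -bits_aux_S ?IH.
by have -> : n = f.+1 by lia.
Qed.

Lemma bits0 : bits 0 = [::]. Proof. by []. Qed.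

Lemma bitsE n : 0 < n -> bits n = odd n :: bits n./2.
Proof.
case: n => // m _; rewrite {1}/bits /=.
congr (_ :: _); apply: bits_aux_ge.
have := half_leq (leqnSn m); rewrite /=; case: (odd m) => /=; lia.
Qed.

Fixpoint val (s : seq bool) : nat :=
  if s is b :: t then b + (val t).*2 else 0.

Lemma last_indep (x y : bool) t : t != [::] -> last x t = last y t.
Proof. by case: t. Qed.

Lemma val_pos s : s != [::] -> last true s -> 0 < val s.
Proof.
elim: s => // b t IH _ /=.
case: t IH => [|c t] IH /=; first by move=> ->.
move=> H; have := IH isT H; rewrite /= -!muln2 => ?; lia.
Qed.

Lemma bits_val s : last true s -> bits (val s) = s.
Proof.
elim: s => // b t IH Hl.
have Hp := @val_pos (b :: t) isT Hl.
rewrite bitsE //= oddD odd_double addbF.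
have -> : (b + (val t).*2)./2 = val t.
  by case: (b) => /=; rewrite ?half_double // uphalf_double.
rewrite oddb; congr (_ :: _); apply: IH.
case: t Hl {Hp} => // c t /=.
Qed.

Lemma val_bits x : val (bits x) = x /\ last true (bits x).
Proof.
elim: x {-2}x (leqnn x) => [|n IH] x Hx.
  by move: Hx; rewrite leqn0 => /eqP ->.
case: (posnP x) => [->//|Hp].
rewrite bitsE //=.
have H2 : x./2 <= n by have := ltn_half_double x; lia.
have [IH1 IH2] := IH _ H2.
rewrite IH1 odd_double_half; split => //.
case: (posnP x./2) => H0.
  rewrite H0 bits0 /=.
  have := odd_double_half x; rewrite H0 /=; case: (odd x) => //; lia.
by rewrite (last_indep _ true) // bitsE.
Qed.

Lemma val_cat s t : val (s ++ t) = val s + 2 ^ size s * val t.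
Proof.
elim: s => [|b s IH] /=; first by rewrite mul1n.
rewrite IH expnS -!muln2; lia.
Qed.

Lemma val_nseq j : val (nseq j false) = 0.
Proof. by elim: j => //= j ->. Qed.

Lemma key x m : 0 < x -> size (bits x) <= m ->
  bits (x * (2 ^ m + 1)) = bits x ++ nseq (m - size (bits x)) false ++ bits x.
Proof.
move=> Hx Hm.
have [V L] := val_bits x.
have Hne : bits x != [::] by rewrite bitsE.
rewrite -{1}(bits_val (bits x ++ nseq (m - size (bits x)) false ++ bits x)).
  congr bits; rewrite !val_cat val_nseq V size_nseq add0n mulnA -expnD subnKC //.
  lia.
rewrite last_cat last_cat (last_indep _ true) //.
Qed.

Theorem theorem11 (N : nat) :
  0 < N ->
  (exists A B : nat, palindromic A /\ palindromic B /\ A = N * B) ->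
  forall k : nat, exists A B : nat,
    k < A /\ palindromic A /\ palindromic B /\ A = N * B.
Proof.
move=> HN [A [B [[HA RA] [[HB RB] E]]]] k.
set m := size (bits A) + size (bits B) + k.
have Hk : k < 2 ^ m by apply: leq_ltn_trans (ltn_expl _ (isT : 1 < 2)); lia.
have pal x : 0 < x -> rev (bits x) = bits x -> size (bits x) <= m ->
    palindromic (x * (2 ^ m + 1)).
  move=> Hx Rx Hs; split; first by rewrite muln_gt0 Hx addn1.
  by rewrite key // !rev_cat Rx rev_nseq catA.
exists (A * (2 ^ m + 1)), (B * (2 ^ m + 1)); split; last split; last split.
- have : 1 <= A by [].
  move=> H1; apply: leq_trans Hk _; rewrite mulnDr muln1; nia.
- by apply: pal => //; rewrite /m; lia.
- by apply: pal => //; rewrite /m; lia.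
- by rewrite E mulnA.
Qed.
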